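(* Let $f$ be a DNF with $k$ terms and let $y\in\{0,1\}^n$ satisfy $f_{>\tau}$ and not $f_{\le\tau}$ ($\tau=1000k$). Fix any permutation $\pi$ and let $z_0,z_1,\dots$ be the sweep process started at $y$. Fix an index $i$ such that $(z_i)_a=y_a$ for all $a\in P(y)$, and let $U_i$ be the set of unanimous indices of $\mathcal{T}_f(z_i)$. Let $j\in[n]$ be such that some stripped term in $\mathcal{T}_f(z_i)\setminus(P(y)\cup U_i)$ contains a literal on $x_j$. Then $\pi(t)\neq j$ for all $t<i$.
   Context: Terms are sets of literals, a DNF is a set of terms; $g_{\le L}$ / $g_{>L}$ are the sub-DNFs of terms of length $\le L$ / $>L$. $\mathcal{T}_f(x)$ is the set of terms of $f$ satisfied by $x$. Protected set $P(y)$: for each term $T\in f$ not satisfied by $y$, take the literal of $T$ with smallest index not satisfied by $y$; $P(y)$ is the set of these indices. Stripped term: for a term $T$ and $S\subseteq[n]$, $T\setminus S$ removes from $T$ all literals $x_i,\overline{x_i}$ with $i\in S$; for a set of terms $\mathcal{T}$, $\mathcal{T}\setminus S=\{T\setminus S: T\in\mathcal{T}\}$. Unanimous indices of a set of terms $\mathcal{T}$: all $i\in[n]$ such that every term in $\mathcal{T}$ contains $x_i$, or every term in $\mathcal{T}$ contains $\overline{x_i}$. Sweep process: given $y$ with $f(y)=1$ and a permutation $\pi$ listing $[n]$ as $\pi(0),\dots,\pi(n-1)$, $z_0=y$, and $z_{t+1}=z_t^{\oplus\pi(t)}$ if $f(z_t^{\oplus\pi(t)})=1$, else $z_{t+1}=z_t$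 ($x^{\oplus j}$ is $x$ with bit $j$ flipped). *)

(* Defs.v *)
From mathcomp Require Import all_boot all_fingroup.
Set Implicit Arguments. Unset Strict Implicit. Unset Printing Implicit Defensive.

(* Boolean points x in {0,1}^n are functions 'I_n -> bool.
   A literal is a pair (i, b): b = true is x_i, b = false is ~x_i.
   A term is a finite set of literals, a DNF a finite set of terms. *)
Definition literal n := ('I_n * bool)%type.
Definition term n := {set literal n}.
Definition dnf n := {set term n}.

Section Defs.
Variable n : nat.

Definition lit_sat (x : 'I_n -> bool) (l : literal n) : bool := x l.1 == l.2.

Definition term_sat (x : 'I_n -> bool) (T : term n) : bool :=
  [forall l in T, lit_sat x l].

Definition dnf_eval (f : dnf n) (x : 'I_n -> bool) : bool :=
  [exists T in f, term_sat x T].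

Definition dnf_le (f : dnf n) (L : nat) : dnf n := [set T in f | #|T| <= L].
Definition dnf_gt (f : dnf n) (L : nat) : dnf n := [set T in f | L < #|T|].

Definition sat_terms (f : dnf n) (x : 'I_n -> bool) : {set term n} :=
  [set T in f | term_sat x T].

Definition min_unsat_index (y : 'I_n -> bool) (T : term n) (i : 'I_n) : bool :=
  [exists b, ((i, b) \in T) && ~~ lit_sat y (i, b)] &&
  [forall j : 'I_n, (j < i) ==> ~~ [exists b, ((j, b) \in T) && ~~ lit_sat y (j, b)]].

Definition protected (f : dnf n) (y : 'I_n -> bool) : {set 'I_n} :=
  [set i | [exists T in f, ~~ term_sat y T && min_unsat_index y T i]].

Definition strip (T : term n) (S : {set 'I_n}) : term n :=
  [set l in T | l.1 \notin S].
Definition strip_terms (TT : {set term n}) (S : {set 'I_n}) : {set term n} :=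
  [set strip T S | T in TT].

Definition unanimous (TT : {set term n}) : {set 'I_n} :=
  [set i | [forall T in TT, (i, true) \in T] || [forall T in TT, (i, false) \in T]].

Definition flip (x : 'I_n -> bool) (j : 'I_n) : 'I_n -> bool :=
  fun a => if a == j then ~~ x a else x a.

(* sweep process: sweep f y pi t = z_t, for t = 0..n (constant after n) *)
Fixpoint sweep (f : dnf n) (y : 'I_n -> bool) (pi : {perm 'I_n}) (t : nat)
  : 'I_n -> bool :=
  match t with
  | 0 => y
  | t'.+1 =>
      let z := sweep f y pi t' in
      match insub t' with
      | Some o => let z' := flip z (pi o) in if dnf_eval f z' then z' else z
      | None => z
      end
  end.

End Defs.

(* Main.v *)
Require Import Defs.
From mathcomp Require Import all_boot all_fingroup.

Section Aux.
Variable n : nat.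
Variables (f : dnf n) (y : 'I_n -> bool) (pi : {perm 'I_n}).

Lemma sweepS (o : 'I_n) : sweep f y pi o.+1 =
  let z := sweep f y pi o in
  let z' := flip z (pi o) in if dnf_eval f z' then z' else z.
Proof. by rewrite /= valK. Qed.

Lemma L1 m a : (forall s : 'I_n, s < m -> pi s != a) -> sweep f y pi m a = y a.
Proof.
elim: m => [//|m IH] H /=.
case: insubP => [o _ Ho|_]; last by apply: IH => s Hs; apply: H; rewrite ltnS ltnW.
have Hna : pi o != a by apply: H; rewrite Ho.
have IH' : sweep f y pi m a = y a by apply: IH => s Hs; apply: H; rewrite ltnS ltnW.
case: ifP => _ //; rewrite /flip eq_sym (negbTE Hna) //.
Qed.

Lemma L2 m a (s0 : 'I_n) : pi s0 = a -> s0 < m -> sweep f y pi m a = sweep f y pi s0.+1 a.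
Proof.
move=> Hs0; elim: m => [//|m IH] Hlt.
rewrite ltnS leq_eqVlt in Hlt; case/orP: Hlt => [/eqP <-//|Hlt].
rewrite /=; case: insubP => [o _ Ho|_]; last by apply: IH.
have Hna : pi o != a.
  rewrite -Hs0; apply/negP => /eqP /perm_inj Eo.
  by move: Hlt; rewrite -Ho Eo ltnn.
case: ifP => _; last by apply: IH.
by rewrite /flip eq_sym (negbTE Hna) IH.
Qed.

Lemma L3 m i a : m <= i -> sweep f y pi m a = y a \/ sweep f y pi m a = sweep f y pi i a.
Proof.
move=> Hmi.
case: (ltnP (pi^-1 a)%g m) => H.
  right; rewrite (@L2 m a (pi^-1 a)%g) ?permKV //.
  rewrite (@L2 i a (pi^-1 a)%g) ?permKV //.
  exact: leq_trans H Hmi.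
left; apply: L1 => s Hs; apply/negP => /eqP E.
by move: H; rewrite -E permK leqNgt Hs.
Qed.

End Aux.

Theorem lemma4p8 (n : nat) (f : dnf n) (y : 'I_n -> bool) (pi : {perm 'I_n})
    (i : nat) (j : 'I_n) :
  let k := #|f| in
  let tau := 1000 * k in
  dnf_eval (dnf_gt f tau) y ->
  ~~ dnf_eval (dnf_le f tau) y ->
  i <= n ->
  (forall a, a \in protected f y -> sweep f y pi i a = y a) ->
  let Ui := unanimous (sat_terms f (sweep f y pi i)) in
  (exists2 S, S \in strip_terms (sat_terms f (sweep f y pi i)) (protected f y :|: Ui)
     & exists b, (j, b) \in S) ->
  forall t : 'I_n, t < i -> pi t != j.
Proof.
move=> k tau _ _ _ HP Ui [S HS [b Hb]] t Hti.
set z := sweep f y pi i.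
have FA : forall T0, T0 \in sat_terms f z -> term_sat y T0.
  move=> T0; rewrite inE => /andP [HT0 Hz].
  apply/negPn/negP => Hny.
  pose P := fun a : 'I_n => [exists b, ((a, b) \in T0) && ~~ lit_sat y (a, b)].
  have [l Hl Hnl] : exists2 l, l \in T0 & ~~ lit_sat y l.
    move/forallPn: Hny => [l]; rewrite negb_imply => /andP [H1 H2].
    by exists l.
  have Pl : P l.1 by apply/existsP; exists l.2; rewrite -surjective_pairing Hl.
  case: (arg_minnP (fun a : 'I_n => val a) Pl) => a Pa Hmin.
  have Hprot : a \in protected f y.
    rewrite inE; apply/existsP; exists T0; rewrite HT0 Hny /=.
    apply/andP; split; first exact: Pa.
    apply/forallP => c; apply/implyP => Hc.
    apply/negP => Pc; have := Hmin c Pc; by rewrite leqNgt Hc.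
  have Hza := HP a Hprot.
  move/existsP: Pa => [b' /andP [Hin Hns]].
  move/forallP: Hz => /(_ (a, b')); rewrite Hin /= /lit_sat /= /z Hza => Hzb.
  by move: Hns; rewrite /lit_sat /= Hzb.
have FB : forall T0, T0 \in sat_terms f z -> forall m, m <= i ->
    forall l, l \in T0 -> sweep f y pi m l.1 = y l.1.
  move=> T0 HT0 m Hm l Hl.
  have Hy := FA T0 HT0.
  move: HT0; rewrite inE => /andP [_ Hz].
  move/forallP: Hz => /(_ l); rewrite Hl /= /lit_sat => /eqP Hz.
  move/forallP: Hy => /(_ l); rewrite Hl /= /lit_sat => /eqP Hy.
  by case: (@L3 n f y pi m i l.1 Hm) => ->; rewrite // -[sweep f y pi i]/z Hz Hy.
apply/negP => /eqP Etj.
move/imsetP: HS => [T HT ES].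
have HbT : (j, b) \in T by move: Hb; rewrite ES inE => /andP [].
have HjU : j \notin Ui by move: Hb; rewrite ES inE /= in_setU negb_or => /andP [_ /andP []].
have Hyj : y j = b.
  have := FA T HT => /forallP /(_ (j, b)); rewrite HbT /= /lit_sat /=; by move/eqP.
have Hzj : z j = b.
  by rewrite /z (FB T HT i (leqnn i) (j, b) HbT) Hyj.
have [T' HT' HnT'] : exists2 T', T' \in sat_terms f z & (j, b) \notin T'.
  move: HjU; rewrite inE negb_or => /andP [H1 H2].
  case: b {Hb HbT Hyj Hzj}; [move/forallPn: H1 | move/forallPn: H2] => -[T' HH];
    rewrite negb_imply in HH; case/andP: HH => ??; by exists T'.
have HnT'2 : (j, ~~ b) \notin T'.
  apply/negP => Hin; move: HT'; rewrite inE => /andP [_ /forallP /(_ (j, ~~ b))].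
  by rewrite Hin /lit_sat /= Hzj; case: (b).
have Hzt : sweep f y pi t j = y j.
  apply: L1 => s Hs; rewrite -Etj; apply/negP => /eqP /perm_inj Es.
  by move: Hs; rewrite Es ltnn.
have E2 : z j = sweep f y pi t.+1 j by apply: (@L2 n f y pi i j t).
move: E2; rewrite sweepS /=; case: ifP => Hev.
  by rewrite /flip Etj eqxx Hzt Hyj Hzj; case: (b).
move=> _; move/negbT: Hev => /negP; apply.
apply/existsP; exists T'; move: (HT'); rewrite inE => /andP [-> _] /=.
apply/forallP => l; apply/implyP => Hl.
have Hl1 : l.1 != j.
  apply/negP => /eqP E; move: Hl; case: l E => a c /= ->.
  have : c = b \/ c = ~~ b by case: (c); case: (b); auto.
  by case=> ->; [rewrite (negbTE HnT') | rewrite (negbTE HnT'2)].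
rewrite /lit_sat /flip Etj (negbTE Hl1) (FB T' HT' t (ltnW Hti) l Hl).
have := FA T' HT' => /forallP /(_ l); by rewrite Hl.
Qed.
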